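(* Let $N\ge 1$ and $m\ge 1$ be integers, let $\Delta\ge 1$ and $K\ge 1$ be reals, and suppose $2^m\le N/(K\Delta)$. Then there is a set $\mathcal{Y}\subseteq(\{0,1\}^m)^N$ whose entropy deficiency is at most $\Delta$ and whose min-entropy rate is at least $1-1/m$, such that for every $I\subseteq[N]$ with $|I|\le (K-1)\Delta$, the set $\mathrm{IND}_m^{[N]\setminus I}([m]^N,\mathcal{Y})$ does not contain the all-$0$ string.
   Context: The Index function $\mathrm{IND}_m:[m]\times\{0,1\}^m\to\{0,1\}$ is $\mathrm{IND}_m(x,y)=y_x$. For $\mathcal{A}\subseteq[m]^N$, $\mathcal{B}\subseteq(\{0,1\}^m)^N$ and $J\subseteq[N]$, $\mathrm{IND}_m^J(\mathcal{A},\mathcal{B})\subseteq\{0,1\}^J$ denotes the set of all vectors $(\mathrm{IND}_m(x_i,y_i))_{i\in J}$ with $x\in\mathcal{A}$, $y\in\mathcal{B}$. A set $\mathcal{S}\subseteq U^N$ is identified with the uniform distribution on it. The entropy deficiency of a distribution $\mathcal{D}$ on a finite universe $V$ is $\log_2|V|-H(\mathcal{D})$, where $H$ is Shannon entropy; for a set $\mathcal{Y}\subseteq(\{0,1\}^m)^N$ this is $mN-\log_2|\mathcal{Y}|$. The min-entropy rate of a distribution $\mathcal{D}$ on $U^N$ is the largest $\tau$ such that for every $J\subseteq[N]$ and every $\alpha_J\in U^J$, $\Pr_{x\sim\mathcal{D}}[x_J=\alpha_J]\le |U|^{-\tau|J|}$ (here $U=\{0,1\}^m$, $|U|=2^m$).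 *)

(* Defs.v *)
From mathcomp Require Import all_boot all_order all_algebra.
From mathcomp Require Import all_classical all_reals all_analysis.
Set Implicit Arguments. Unset Strict Implicit. Unset Printing Implicit Defensive.
Import Order.TTheory GRing.Theory Num.Theory.
Local Open Scope ring_scope.

Notation word m := {ffun 'I_m -> bool}.

Definition IND (m : nat) (x : 'I_m) (y : word m) : bool := y x.

(* IND_m^J(A, B): the set of vectors (IND_m(x_i, y_i))_{i in J}, x in A, y in B.
   A vector in {0,1}^J is encoded as a function on [N] that is false outside J. *)
Definition INDJ (N m : nat) (J : {set 'I_N}) (A : {set {ffun 'I_N -> 'I_m}})
  (B : {set {ffun 'I_N -> word m}}) : {set {ffun 'I_N -> bool}} :=
  [set [ffun i => (i \in J) && IND (x i) (y i)] | x : {ffun 'I_N -> 'I_m} in A, y : {ffun 'I_N -> word m} in B].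

Definition zero_string (N : nat) : {ffun 'I_N -> bool} := [ffun => false].

Definition log2 (R : realType) (x : R) : R := ln x / ln 2.

(* entropy deficiency of (the uniform distribution on) Y : m N - log2 |Y| *)
Definition entropy_deficiency (R : realType) (N m : nat)
  (Y : {set {ffun 'I_N -> word m}}) : R :=
  (m * N)%:R - log2 (#|Y|%:R : R).

(* The min-entropy rate of (uniform on) Y is at least tau: for every J and every
   alpha_J in U^J, Pr_{y ~ Y}[y_J = alpha_J] <= |U|^(-tau |J|), |U| = 2^m. *)
Definition min_entropy_rate_ge (R : realType) (N m : nat)
  (Y : {set {ffun 'I_N -> word m}}) (tau : R) : Prop :=
  forall (J : {set 'I_N}) (alpha : {ffun 'I_N -> word m}),
    (#|[set y in Y | [forall i in J, y i == alpha i]]|%:R / #|Y|%:R : R)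
      <= ((2 ^ m)%:R : R) `^ (- (tau * #|J|%:R)).

(* Main.v *)
Require Import Defs.
From mathcomp Require Import all_boot all_order all_algebra.
From mathcomp Require Import all_classical all_reals all_analysis.
From mathcomp Require Import zify ring lra.
Import Order.TTheory GRing.Theory Num.Theory.
Set Implicit Arguments. Unset Strict Implicit. Unset Printing Implicit Defensive.
Lemma arith_E (N k a j : nat) : 1 <= a -> k * a.+1 <= N -> j.+2 <= k ->
  (k - 2 - j).+1 * (a * a) * (k + j).+1 <= (N - (k - 2 - j)) * (N - (k + j)).
Proof.
move=> a1 hN hj.
have [r ek] : exists r, k = j + 2 + r by exists (k - (j+2)); lia.
subst k.
have [s eN] : exists s, N = (j + 2 + r) * a.+1 + s by exists (N - (j + 2 + r) * a.+1); rewrite subnKC.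
subst N.
have -> : (j + 2 + r - 2 - j) = r by lia.
have -> : (j + 2 + r) * a.+1 + s - r = (j+2+r)*a + j + 2 + s by lia.
have -> : (j + 2 + r) * a.+1 + s - (j + 2 + r + j) = (j+2+r)*a + s - j by lia.
set b := (j+2+r)*a.
have h1 : j <= b by rewrite /b -[j]muln1; apply: leq_mul => //; lia.
have -> : b + s - j = (b - j) + s by lia.
set q := b - j.
have hq : b = q + j by lia.
have -> : b + j + 2 + s = q + 2*j + 2 + s by lia.
have e1 : r.+1 * (a * a) * (j + 2 + r + j).+1 + (j+1)*(j+1)*(a*a) = b * b.
  rewrite /b; ring.
have e2 : (q + 2*j + 2) * q + (j+1)*(j+1) = (b+1)*(b+1) by rewrite hq; ring.
have e3 : (j+1)*(j+1) <= (j+1)*(j+1)*(a*a) by rewrite -{1}[(j+1)*(j+1)]muln1; apply: leq_mul => //; rewrite muln_gt0 a1.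
have e4 : (q + 2*j + 2) * q <= (q + 2 * j + 2 + s) * (q + s) by apply: leq_mul; lia.
have e5 : b * b <= (b+1)*(b+1) by apply: leq_mul; lia.
lia.
Qed.

Lemma pair_ineq (N k a j : nat) : 1 <= a -> k * a.+1 <= N -> j < k ->
  'C(N, k - 1 - j) * a ^ (2*j+1) <= 'C(N, k + j).
Proof.
move=> a1 hN.
elim: j => [|j IH] hj.
  case: k hN hj => [//|k] hN _.
  have -> : k.+1 - 1 - 0 = k by lia.
  rewrite addn0 expn1 -(@leq_pmul2l k.+1) // mul_bin_left mulnCA.
  rewrite mulnC leq_mul2r; apply/orP; right.
  move: hN; lia.
have IH' := IH (ltnW hj).
set u := k - 2 - j.
have hu : k - 1 - j = u.+1 by rewrite /u; lia.
have hu2 : k - 1 - j.+1 = u by rewrite /u; lia.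
rewrite hu in IH'; rewrite hu2.
set v := k + j.
have hv : k + j.+1 = v.+1 by rewrite /v addnS.
rewrite hv.
have E := arith_E a1 hN hj.
rewrite -/u -/v in E.
have b1 := mul_bin_left N u.
have b2 := mul_bin_left N v.
have pos : 0 < (N - u) * v.+1.
  rewrite muln_gt0 andbT subn_gt0 /u.
  have : k <= N by apply: leq_trans hN; rewrite leq_pmulr.
  lia.
rewrite -(leq_pmul2l pos).
have -> : (N - u) * v.+1 * 'C(N, v.+1) = (N - u) * (N - v) * 'C(N, v).
  by rewrite -mulnA b2 mulnA.
have -> : (N - u) * v.+1 * ('C(N, u) * a ^ (2 * j.+1 + 1))
    = (u.+1 * 'C(N, u.+1) * a ^ (2 * j + 1)) * (v.+1 * (a * a)).
  rewrite b1 -!mulnA; congr (_ * _).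
  rewrite mulnCA; congr (_ * _).
  have -> : 2 * j.+1 + 1 = (2 * j + 1) + 2 by lia.
  rewrite expnD; ring.
apply: (@leq_trans ((u.+1 * 'C(N, v)) * (v.+1 * (a * a)))).
  rewrite leq_mul2r -mulnA leq_mul2l IH' !orbT //.
rewrite [u.+1 * _]mulnC -mulnA [X in _ <= X]mulnC leq_mul2l; apply/orP; right.
move: E; rewrite -mulnA; lia.
Qed.

Lemma sum_ineq (N k a : nat) : 1 <= a -> k * a.+1 <= N ->
  \sum_(0 <= j < k) 'C(N,j) * a^(N-j) <= \sum_(k <= j < N.+1) 'C(N,j) * a^(N-j).
Proof.
move=> a1 hN.
have k2 : k + k <= N.+1.
  apply: leq_trans (leqnSn N); apply: leq_trans hN.
  rewrite addnn -muln2 leq_mul2l ltnS a1 orbT //.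
rewrite big_nat_rev /= add0n.
apply: (@leq_trans (\sum_(0 <= j < k) 'C(N, k + j) * a ^ (N - (k + j)))).
  rewrite big_nat_cond [X in _ <= X]big_nat_cond.
  apply: leq_sum => j /andP [/andP [_ hj] _].
  have -> : k - j.+1 = k - 1 - j by lia.
  have -> : N - (k - 1 - j) = (2 * j + 1) + (N - (k + j)) by lia.
  rewrite expnD mulnA leq_mul2r; apply/orP; right.
  exact: pair_ineq.
rewrite [X in _ <= X](big_cat_nat (n := k + k)) //=; last by rewrite leq_addr.
apply: leq_trans (leq_addr _ _).
have -> : \sum_(k <= i < k + k) 'C(N, i) * a ^ (N - i) = \sum_(0 <= j < k) 'C(N, k + j) * a ^ (N - (k + j)).
  rewrite -{1}[k]add0n big_addn addnK; apply: eq_bigr => j _; by rewrite addnC.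
by [].
Qed.

Lemma binom_total (N a : nat) :
  \sum_(0 <= j < N.+1) 'C(N,j) * a^(N-j) = a.+1 ^ N.
Proof.
rewrite -[a.+1]addn1 expnDn big_mkord; apply: eq_bigr => j _.
by rewrite exp1n muln1.
Qed.

Lemma median_count (N k a : nat) : 1 <= a -> k * a.+1 <= N ->
  a.+1 ^ N <= 2 * \sum_(0 <= j < N.+1) (k <= j) * ('C(N,j) * a^(N-j)).
Proof.
move=> a1 hN.
have kN : k <= N.+1.
  apply: leq_trans (leqnSn N); apply: leq_trans hN; rewrite leq_pmulr //.
have -> : \sum_(0 <= j < N.+1) (k <= j) * ('C(N,j) * a^(N-j))
    = \sum_(k <= j < N.+1) 'C(N,j) * a^(N-j).
  rewrite (big_cat_nat (n := k)) //= big1_seq ?add0n; last first.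
    move=> j /andP [_]; rewrite mem_index_iota => /andP [_ hj].
    by rewrite leqNgt hj.
  rewrite big_nat_cond [X in _ = X]big_nat_cond; apply: eq_bigr => j /andP [/andP [hj _] _].
  by rewrite hj mul1n.
rewrite -binom_total (big_cat_nat (n := k)) //= mul2n -addnn leq_add2r.
exact: sum_ineq.
Qed.

Lemma sumb_card (T : finType) (p : pred T) : \sum_t (p t : nat) = #|p|.
Proof. by rewrite -sum1_card [RHS]big_mkcond; apply: eq_bigr => t _; rewrite unfold_in; case: (p t). Qed.

Lemma prod_bool (I : finType) (b : I -> bool) :
  \prod_i (b i : nat) = [forall i, b i].
Proof.
case: forallP => H.
  by rewrite big1 // => i _; rewrite H.
have [i Hi] : exists i, ~~ b i.
  apply/existsP; apply: contraT; rewrite negb_exists => /forallP H2.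
  by exfalso; apply: H => i; move: (H2 i); rewrite negbK.
by rewrite (bigD1 i) //= (negbTE Hi) mul0n.
Qed.

Lemma count_fiber (T : finType) (e : T) (N : nat) (A : {set 'I_N}) :
  \sum_(y : {ffun 'I_N -> T}) ([set i | y i == e] == A : nat) = (#|T| - 1) ^ (N - #|A|).
Proof.
have -> : \sum_(y : {ffun 'I_N -> T}) ([set i | y i == e] == A : nat)
   = \sum_(y : {ffun 'I_N -> T}) \prod_i (((y i == e) == (i \in A)) : nat).
  apply: eq_bigr => y _; rewrite prod_bool; congr nat_of_bool.
  apply/eqP/forallP => [<- i|H]; first by rewrite inE.
  by apply/setP => i; rewrite inE; apply/eqP: (H i).
rewrite -(bigA_distr_bigA (fun i t => (((t == e) == (i \in A)) : nat))) /=.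
rewrite (bigID (mem A)) /= big1; last first.
  move=> i iA; rewrite iA; rewrite (eq_bigr (fun t => (t == e) : nat)); last first.
    by move=> t _; rewrite eqb_id.
  by rewrite sumb_card card1.
rewrite mul1n (eq_bigr (fun _ => #|T| - 1)); last first.
  move=> i /negbTE ->.
  rewrite (eq_bigr (fun t => (t != e) : nat)); last by move=> t _; rewrite eqbF_neg.
  transitivity #|predC1 e|; first exact: (sumb_card (predC1 e)).
  by rewrite cardC1 subn1.
rewrite prod_nat_const; congr (_ ^ _).
transitivity (#|'I_N| - #|A|); last by rewrite card_ord.
rewrite -(cardC A) addKn; apply: eq_card => i; by rewrite !inE.
Qed.

Lemma sumb_cards (T : finType) (A : {set T}) : \sum_t (t \in A : nat) = #|A|.
Proof. by rewrite -sum1_card [RHS]big_mkcond; apply: eq_bigr => t _; case: (t \in A). Qed.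

Lemma sum_sets_card (N : nat) (G : nat -> nat) :
  \sum_(A : {set 'I_N}) G #|A| = \sum_(0 <= j < N.+1) 'C(N,j) * G j.
Proof.
rewrite big_mkord.
transitivity (\sum_(A : {set 'I_N}) \sum_(j < N.+1) (#|A| == j) * G j).
  apply: eq_bigr => A _.
  have hA : #|A| < N.+1 by rewrite ltnS; have := max_card A; rewrite card_ord.
  rewrite (bigD1 (inord #|A|)) //= inordK // eqxx mul1n big1 ?addn0 // => j hj.
  case: eqP => [h|]; last by rewrite mul0n.
  by move: hj; rewrite h inord_val eqxx.
rewrite exchange_big; apply: eq_bigr => j _.
rewrite -big_distrl /=.
have -> : \sum_(A : {set 'I_N}) (#|A| == j : nat) = #|[set A : {set 'I_N} | #|A| == j]|.
  by rewrite -sumb_cards; apply: eq_bigr => A _; rewrite inE.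
by rewrite card_draws card_ord mulnC.
Qed.

Lemma count_pred (T : finType) (e : T) (N : nat) (P : pred nat) :
  #|[set y : {ffun 'I_N -> T} | P #|[set i | y i == e]|]|
    = \sum_(0 <= j < N.+1) P j * ('C(N,j) * (#|T| - 1)^(N-j)).
Proof.
rewrite -sumb_cards.
transitivity (\sum_(y : {ffun 'I_N -> T}) \sum_(A : {set 'I_N})
      (([set i | y i == e] == A) : nat) * P #|A|).
  apply: eq_bigr => y _; rewrite inE.
  rewrite (bigD1 [set i | y i == e]) //= eqxx mul1n big1 ?addn0 // => B hB.
  by rewrite eq_sym (negbTE hB).
rewrite exchange_big /=.
transitivity (\sum_(A : {set 'I_N}) ((#|T| - 1) ^ (N - #|A|) * P #|A|)).
  by apply: eq_bigr => A _; rewrite -big_distrl /= count_fiber.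
rewrite (@sum_sets_card N (fun j => (#|T| - 1) ^ (N - j) * P j)).
by apply: eq_bigr => j _; ring.
Qed.

Lemma count_agree (T : finType) (N : nat) (J : {set 'I_N}) (alpha : {ffun 'I_N -> T}) :
  #|[set y : {ffun 'I_N -> T} | [forall i in J, y i == alpha i]]| = #|T| ^ (N - #|J|).
Proof.
rewrite -sumb_cards.
have -> : \sum_(y : {ffun 'I_N -> T}) (y \in [set y : {ffun 'I_N -> T} | [forall i in J, y i == alpha i]] : nat)
   = \sum_(y : {ffun 'I_N -> T}) \prod_i (((i \in J) ==> (y i == alpha i)) : nat).
  by apply: eq_bigr => y _; rewrite prod_bool inE.
rewrite -(bigA_distr_bigA (fun i t => (((i \in J) ==> (t == alpha i)) : nat))) /=.
rewrite (bigID (mem J)) /= big1; last first.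
  move=> i iJ; rewrite iJ /=.
  transitivity #|pred1 (alpha i)|; first exact: (sumb_card (pred1 (alpha i))).
  by rewrite card1.
rewrite mul1n (eq_bigr (fun _ => #|T|)); last first.
  move=> i /negbTE -> /=.
  by rewrite (eq_bigr (fun _ => 1)) // sum1_card.
rewrite prod_nat_const; congr (_ ^ _).
transitivity (#|'I_N| - #|J|); last by rewrite card_ord.
rewrite -(cardC J) addKn; apply: eq_card => i; by rewrite !inE.
Qed.

Lemma main_count (m N : nat) : (1 <= m)%N ->
  (2 ^ (m * N) <= 2 * #|[set y : {ffun 'I_N -> word m} |
       (N %/ 2 ^ m <= #|[set i | y i == [ffun => true]]|)%N]|)%N.
Proof.
move=> m1.
rewrite (count_pred [ffun => true] N (fun j => N %/ 2 ^ m <= j)%N).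
have cT : #|word m| = 2 ^ m by rewrite card_ffun card_bool card_ord.
rewrite cT.
have a1 : (1 <= 2 ^ m - 1)%N.
  have : (2 <= 2 ^ m)%N by rewrite -{1}(expn1 2) leq_exp2l.
  lia.
have e : (2 ^ m - 1).+1 = 2 ^ m.
  have : (1 <= 2 ^ m)%N by rewrite expn_gt0.
  lia.
have := median_count a1 (k := N %/ 2 ^ m) (N := N).
rewrite e expnM => H; apply: H.
exact: leq_trunc_div.
Qed.

Unset Implicit Arguments.
Local Open Scope ring_scope.

Theorem theorem2 (R : realType) (N m : nat) (Delta K : R) :
  (1 <= N)%N -> (1 <= m)%N -> 1 <= Delta -> 1 <= K ->
  ((2 ^ m)%:R : R) <= N%:R / (K * Delta) ->
  exists Y : {set {ffun 'I_N -> {ffun 'I_m -> bool}}},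
    [/\ Y != finset.set0,
        @entropy_deficiency R N m Y <= Delta,
        @min_entropy_rate_ge R N m Y (1 - 1 / m%:R) &
        forall I : {set 'I_N}, (#|I|%:R : R) <= (K - 1) * Delta ->
          zero_string N \notin INDJ (~: I) [set: {ffun 'I_N -> 'I_m}] Y].
Proof.
move=> N1 m1 D1 K1 hL.
set k := (N %/ 2 ^ m)%N.
set ones : word m := [ffun => true].
set Y := [set y : {ffun 'I_N -> word m} | (k <= #|[set i | y i == ones]|)%N].
have hY := main_count N m1; rewrite -/k -/ones -/Y in hY.
set c := #|Y| in hY.
have c0 : (0 < c)%N.
  rewrite lt0n; apply/negP => /eqP c0; move: hY; rewrite c0 muln0 leqn0.
  by rewrite expn_eq0.
exists Y; split.
- by apply/negP => /eqP Y0; move: c0; rewrite /c Y0 cards0.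
- rewrite /entropy_deficiency /log2 -/c.
  have l2 : 0 < ln (2:R) by apply: ln_gt0; lra.
  have H : ln (2:R) *+ (m*N) <= ln 2 + ln (c%:R).
    rewrite -lnXn ?ltr0n // -lnM ?posrE ?ltr0n //.
    rewrite ler_ln ?posrE ?ltr0n ?mulr_gt0 ?exprn_gt0 ?ltr0n //.
    by rewrite -natrX -natrM ler_nat.
  apply: le_trans D1.
  rewrite lerBlDr.
  have -> : 1 + ln (c%:R) / ln (2:R) = (ln 2 + ln (c%:R)) / ln 2.
    by field; rewrite gt_eqF.
  by rewrite ler_pdivlMr // mulr_natl.
- move=> J alpha.
  set j := #|J|.
  set S := [set y in Y | [forall i in J, y i == alpha i]].
  have hnumc : (#|S| <= c)%N.
    by rewrite /c; apply: subset_leq_card; apply/fintype.subsetP => y; rewrite inE => /andP [].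
  have hnum : (#|S| <= 2 ^ (m * (N - j)))%N.
    apply: (@leq_trans #|[set y : {ffun 'I_N -> word m} | [forall i in J, y i == alpha i]]|).
      by apply: subset_leq_card; apply/fintype.subsetP => y; rewrite !inE => /andP [].
    by rewrite count_agree card_ffun card_bool card_ord expnM.
  have c0R : (0:R) < c%:R by rewrite ltr0n.
  have [j0|j1] := eqVneq j 0%N.
    rewrite j0 mulr0 oppr0 powRr0 ler_pdivrMr // mul1r ler_nat //.
  have jN : (j <= N)%N by rewrite /j; have := max_card J; rewrite card_ord.
  have hn : (#|S| * 2 ^ ((m - 1) * j) <= c)%N.
    rewrite -(@leq_pmul2l 2) //; apply: leq_trans hY.
    rewrite mulnA; apply: (@leq_trans (2 * 2 ^ (m * (N - j)) * 2 ^ ((m - 1) * j))).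
      by rewrite leq_mul2r leq_mul2l hnum !orbT.
    rewrite -expnS -expnD leq_exp2l //.
    have : (m * j <= m * N)%N by rewrite leq_mul2l jN orbT.
    have : (j <= m * j)%N by rewrite leq_pmull.
    rewrite mulnBr mulnBl mul1n.
    have : (0 < j)%N by rewrite lt0n.
    lia.
  have e : ((2 ^ m)%:R : R) = (2:R) `^ (m%:R) by rewrite powR_mulrn ?natrX.
  rewrite e -powRrM.
  have -> : m%:R * (-((1 - 1/m%:R) * j%:R)) = - (((m - 1) * j)%N%:R : R).
    rewrite natrM natrB //; field.
    by rewrite pnatr_eq0 -lt0n.
  rewrite powRN powR_mulrn // -natrX.
  rewrite ler_pdivrMr // ler_pdivlMl ?ltr0n ?expn_gt0 // -natrM ler_nat mulnC //.
- move=> I hI.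
  have kI : (#|I| < k)%N.
    have P0 : (0:R) < (2 ^ m)%:R by rewrite ltr0n expn_gt0.
    have KD : (0:R) < K * Delta by apply: mulr_gt0; lra.
    have h1 : (2 ^ m)%:R * (K * Delta) <= N%:R by rewrite -ler_pdivlMr.
    have h2 : (N%:R : R) < (k.+1)%:R * (2 ^ m)%:R.
      by rewrite -natrM ltr_nat /k ltn_ceil // expn_gt0.
    have h3 : K * Delta < (k.+1)%:R.
      rewrite -(ltr_pM2l P0); apply: le_lt_trans h1 _; by rewrite mulrC.
    have e : (K - 1) * Delta = K * Delta - Delta by ring.
    rewrite e in hI.
    rewrite -(ltr_nat R); move: h3; rewrite -natr1; lra.
  apply/negP => /imset2P [x y _ hy heq].
  rewrite inE in hy.
  have : ~~ ([set i | y i == ones] \subset I).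
    apply/negP => sub; by move: (leq_trans hy (subset_leq_card sub)); rewrite leqNgt kI.
  case/fintype.subsetPn => i hi hiI.
  have := congr1 (fun f : {ffun 'I_N -> bool} => f i) heq.
  rewrite /zero_string !ffunE /= inE hiI /IND.
  rewrite inE in hi; rewrite (eqP hi) ffunE //.
Qed.
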